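(* Let $G$ be a finite primitive permutation group of O'Nan–Scott type $\mathrm{HA}$, $\mathrm{HS}$, $\mathrm{HC}$, $\mathrm{TW}$, $\mathrm{SD}$ or $\mathrm{CD}$, and let $M$ be a point stabilizer of $G$. Then $M$ is a perfect code of $G$.
   Context: All groups are finite. For a group $G$ with identity $e$ and an inverse-closed subset $S\subseteq G\setminus\{e\}$, the Cayley graph $\mathrm{Cay}(G,S)$ has vertex set $G$ and edges $\{g,sg\}$ for $s\in S$, $g\in G$. A perfect code in a graph is a set $C$ of vertices that is independent and such that every vertex outside $C$ is adjacent to exactly one vertex of $C$. A subset (in particular a subgroup) $C$ of a group $G$ is called a perfect code of $G$ if there is a Cayley graph $\mathrm{Cay}(G,S)$ of $G$ in which $C$ is a perfect code. The types $\mathrm{HA},\mathrm{HS},\mathrm{HC},\mathrm{TW},\mathrm{SD},\mathrm{CD},\mathrm{AS},\mathrm{PA}$ of primitive groups are those of the O'Nan–Scott classification (e.g. as in Praeger, 1997). *)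

(* Defs.v *)
From mathcomp Require Import all_boot all_fingroup all_solvable.

Set Implicit Arguments.
Unset Strict Implicit.
Unset Printing Implicit Defensive.

Local Open Scope group_scope.

Section PerfectCode.
Variable gT : finGroupType.

(* In Cay(G,S) the edges are {g, s g}, s in S: h is adjacent to g iff h g^-1 \in S. *)
Definition cay_adj (S : {set gT}) (g h : gT) : bool := h * g^-1 \in S.

Definition cayley_set (G S : {set gT}) : Prop :=
  S \subset G /\ (1 \notin S) /\ (forall s, s \in S -> s^-1 \in S).

Definition perfect_code_in (G S C : {set gT}) : Prop :=
  [/\ C \subset G,
      (forall c1 c2, c1 \in C -> c2 \in C -> ~~ cay_adj S c1 c2) &
      (forall g, g \in G :\: C -> #|[set c in C | cay_adj S g c]| = 1%N)].

Definition perfect_code_of (G C : {set gT}) : Prop :=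
  C \subset G /\ exists S, cayley_set G S /\ perfect_code_in G S C.
End PerfectCode.

Section ONanScott.
Variable T : finType.
Implicit Types (G N H : {group {perm T}}).

Definition min_normal N G : bool := (N \subset G) && minnormal N G.

Definition unique_min_normal N G : Prop :=
  min_normal N G /\ forall N' : {group {perm T}}, min_normal N' G -> N' = N.

(* Ti is a simple direct factor of the nonabelian minimal normal subgroup N
   (i.e. a nonabelian simple normal subgroup of N). *)
Definition simple_factor (Ti : {group {perm T}}) N : bool := [&& Ti <| N, simple Ti & ~~ abelian Ti].

(* the natural projection of N = Ti x C_N(Ti) onto the factor Ti *)
Definition factor_proj (Ti : {group {perm T}}) N (y : {perm T}) : {perm T} := divgr Ti 'C_N(Ti) y.

Definition subdirect (H : {set {perm T}}) N : Prop :=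
  forall Ti : {group {perm T}}, simple_factor Ti N ->
    [set factor_proj Ti N y | y in H] = Ti.

Definition typeHA G : Prop :=
  exists N, min_normal N G /\ abelian N.

Definition typeHS G : Prop :=
  exists N1 N2 : {group {perm T}}, [/\ min_normal N1 G, min_normal N2 G, N1 != N2,
                    ~~ abelian N1 & simple N1].

(* G has two distinct minimal normal subgroups, isomorphic to T^k, k >= 2 *)
Definition typeHC G : Prop :=
  exists N1 N2 : {group {perm T}}, [/\ min_normal N1 G, min_normal N2 G, N1 != N2,
                    ~~ abelian N1 & ~~ simple N1].

(* unique minimal normal subgroup N = T^k, T nonabelian simple, k >= 2 *)
Definition unique_nonab_nonsimple N G : Prop :=
  [/\ unique_min_normal N G, ~~ abelian N & ~~ simple N].

Definition typeTW G : Prop :=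
  exists N, unique_nonab_nonsimple N G /\
    forall x : T, 'C_N[x | 'P] = 1.

(* SD: N_alpha is a full diagonal subgroup: subdirect in N and isomorphic to T *)
Definition typeSD G : Prop :=
  exists N, unique_nonab_nonsimple N G /\
    forall x : T, subdirect 'C_N[x | 'P] N /\
      exists Ti : {group {perm T}}, simple_factor Ti N && ('C_N[x | 'P] \isog Ti).

(* CD: N_alpha is subdirect in N and isomorphic to T^l with l >= 2
   (a nontrivial subdirect subgroup of T^k is isomorphic to some T^l, l >= 1,
    and l >= 2 exactly when it is not isomorphic to T) *)
Definition typeCD G : Prop :=
  exists N, unique_nonab_nonsimple N G /\
    forall x : T, subdirect 'C_N[x | 'P] N /\
      forall Ti : {group {perm T}}, simple_factor Ti N -> ~~ ('C_N[x | 'P] \isog Ti).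

End ONanScott.

(* Main.v *)
Require Import Defs.
From mathcomp Require Import all_boot all_fingroup all_solvable.
Set Implicit Arguments.
Unset Strict Implicit.
Unset Printing Implicit Defensive.
Local Open Scope group_scope.

Section Gen.
Variable gT : finGroupType.
Implicit Types (N D K X Y : {group gT}).

Lemma bd_sub (s : seq {group gT}) N Y :
  \big[dprod/1]_(X <- s) (X : {set gT}) = N -> Y \in s -> Y \subset N.
Proof.
elim: s N => [|X s IH] N; first by [].
rewrite big_cons => /dprodP [[X0 N' _ eN'] defN cN' tr]; rewrite eN' in defN cN' tr.
rewrite inE => /orP [/eqP -> | Ys]; rewrite -defN.
  by rewrite mulG_subl.
by rewrite (subset_trans (IH _ eN' Ys)) // mulG_subr.
Qed.

Lemma bd_cent (s : seq {group gT}) N Y :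
  \big[dprod/1]_(X <- s) (X : {set gT}) = N -> Y \in s -> N \subset Y * 'C_N(Y).
Proof.
elim: s N => [|X s IH] N; first by [].
rewrite big_cons => /dprodP [[X0 N' _ eN'] defN cN' tr]; rewrite eN' in defN cN' tr.
have sXN : X \subset N by rewrite -defN mulG_subl.
have sN'N : N' \subset N by rewrite -defN mulG_subr.
rewrite inE => /orP [/eqP -> | Ys].
  by rewrite -{1}defN mulgS // subsetI sN'N.
have sYN' := bd_sub eN' Ys.
have cXY : X \subset 'C(Y) by rewrite centsC (subset_trans sYN').
rewrite -{1}defN (subset_trans (mulgS _ (IH _ eN' Ys))) //.
rewrite mulgA (normC (cents_norm cXY)) -mulgA mulgS //.
apply: mul_subG; first by rewrite subsetI sXN.
by apply: setSI.
Qed.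

Lemma bd_normal (s : seq {group gT}) N Y :
  \big[dprod/1]_(X <- s) (X : {set gT}) = N -> Y \in s -> Y <| N.
Proof.
move=> defN Ys; rewrite /normal (bd_sub defN Ys) /=.
apply: subset_trans (bd_cent defN Ys) _.
by rewrite mul_subG ?normG // (subset_trans (subsetIr _ _)) ?cent_sub.
Qed.

Lemma bd_abelian (s : seq {group gT}) N :
  \big[dprod/1]_(X <- s) (X : {set gT}) = N -> (forall Y, Y \in s -> abelian Y) ->
  abelian N.
Proof.
elim: s N => [|X s IH] N; first by rewrite big_nil => <- _; apply: abelian1.
rewrite big_cons => /dprodP [[X0 N' _ eN'] defN cN' tr] ab; rewrite eN' in defN cN' tr.
rewrite -defN abelianM cN' andbT ab ?mem_head //.
by apply: IH eN' _ => Y Ys; apply: ab; rewrite inE Ys orbT.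
Qed.

Lemma key_compl (s : seq {group gT}) : forall N D,
  \big[dprod/1]_(X <- s) (X : {set gT}) = N ->
  (forall X, X \in s -> simple X) -> D \subset N ->
  (forall X, X \in s -> D * 'C_N(X) = N) ->
  exists K : {group gT}, [/\ K \subset N, D :&: K = 1 & D * K = N].
Proof.
elim: s => [|X s IH] N D.
  rewrite big_nil => <- _ sD _; exists 1%G; split => //.
    by rewrite setIg1.
  by rewrite mulg1; apply/trivgP.
rewrite big_cons => /dprodP [[X0 N' _ eN'] defN cN' tr]; rewrite eN' in defN cN' tr.
move=> simp sDN sub.
have sXN : X \subset N by rewrite -defN mulG_subl.
have sN'N : N' \subset N by rewrite -defN mulG_subr.
have nXN : N \subset 'N(X) by rewrite -defN mul_subG ?normG // cents_norm.
have nDX : D \subset 'N(X) := subset_trans sDN nXN.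
have eDX : D <*> X = D * X := norm_joinEl nDX.
pose D' := ((D <*> X)%G :&: N')%G.
have hyp' : forall Y, Y \in s -> D' * 'C_N'(Y) = N'.
  move=> Y Ys; have sYN' := bd_sub eN' Ys.
  have cXY : X \subset 'C(Y) by rewrite centsC (subset_trans sYN').
  have eC : 'C_N(Y) = X * 'C_N'(Y) by rewrite -defN -group_modl.
  rewrite /D' /= setIC group_modr ?subsetIl // eDX -mulgA -eC sub.
    by apply/setIidPl.
  by rewrite inE Ys orbT.
have simp' : forall Y, Y \in s -> simple Y.
  by move=> Y Ys; apply: simp; rewrite inE Ys orbT.
have [K' [sK' tK' eK']] := IH N' D' eN' simp' (subsetIr _ _) hyp'.
have nDXX : (D :&: X)%G <| X.
  rewrite /normal /= (subsetIr D X) /=; apply: subset_trans sXN _.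
  rewrite -(sub X (mem_head _ _)) mul_subG //.
    by rewrite normsI ?normG.
  apply: cents_norm; apply: subset_trans (subsetIr _ _) _.
  by apply: centS; apply: subsetIr.
have sDDX : D \subset D <*> X := joing_subl _ _.
have sXDX : X \subset D <*> X := joing_subr _ _.
case/simpleP: (simp X (mem_head _ _)) => _ /(_ (D :&: X)%G nDXX) [e1|eX].
  have cK'X : K' \subset 'C(X) := subset_trans sK' cN'.
  exists (X <*> K')%G; split.
  - by rewrite /= (cent_joinEr cK'X) -defN mulgS.
  - apply/trivgP/subsetP => d /setIP[Dd]; rewrite /= (cent_joinEr cK'X) => /mulsgP[x k Xx Kk dE]; subst d.
    have kN' : k \in N' := subsetP sK' k Kk.
    have : k \in D' :&: K'.
      rewrite !inE kN' Kk !andbT /=.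
      have -> : k = x^-1 * (x * k) by rewrite mulKg.
      by apply: groupM; [rewrite groupV; exact: (subsetP sXDX) | exact: (subsetP sDDX)].
    rewrite tK' => /set1P k1; subst k; rewrite mulg1 in Dd *.
    by rewrite -e1 inE Dd Xx.
  - rewrite /= (cent_joinEr cK'X).
    apply/eqP; rewrite eqEsubset mul_subG //=; last first.
      by rewrite -defN mulgS.
    rewrite -{1}defN -eK' mulgA [D * _]mulgA -eDX mulSg //.
    by rewrite mul_subG // subsetIl.
have sXD : X \subset D by rewrite -eX subsetIl.
have eDX' : D <*> X = D by rewrite eDX mulGSid.
exists K'; split.
- exact: subset_trans sK' sN'N.
- apply/trivgP/subsetP => d /setIP[Dd Kd].
  have : d \in D' :&: K'.
    apply/setIP; split => //; apply/setIP; split; [exact: (subsetP sDDX) | exact: (subsetP sK')].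
  by rewrite tK'.
- apply/eqP; rewrite eqEsubset mul_subG ?(subset_trans sK' sN'N) //=.
  rewrite -{1}defN -eK' mulgA mulSg // mul_subG //.
  by apply: subset_trans (subsetIl _ _) _; rewrite /= eDX'.
Qed.
End Gen.
Lemma pc_compl (gT : finGroupType) (G M K : {group gT}) :
  M \subset G -> K \subset G -> M :&: K = 1 -> M * K = G -> perfect_code_of G M.
Proof.
move=> sMG sKG tMK eMK; split => //; exists (K :\ 1); split.
  split; first exact: subset_trans (subsetDl K [set 1]) sKG.
  split; first by rewrite !inE eqxx.
  by move=> s; rewrite !inE => /andP[s1 Ks]; rewrite groupV Ks invg_eq1 s1.
split => //.
  move=> c1 c2 Mc1 Mc2; rewrite /cay_adj !inE; apply/negP => /andP[ne Kc].
  have : c2 * c1^-1 \in M :&: K by rewrite inE groupM ?groupV ?Mc1 ?Mc2.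
  by rewrite tMK => /set1P e; rewrite e eqxx in ne.
move=> g /setDP[Gg Mg'].
have : g^-1 \in M * K by rewrite eMK groupV.
case/mulsgP => m k Mm Kk eg.
have -> : [set c in M | cay_adj (K :\ 1) g c] = [set m^-1].
  apply/setP => c; rewrite !inE /cay_adj !inE eg.
  apply/idP/idP.
    case/andP => Mc /andP[_ Kc].
    have : c * m \in M :&: K.
      rewrite inE groupM //=.
      have -> : c * m = c * (m * k) * k^-1 by rewrite mulgA mulgK.
      by rewrite groupM ?groupV.
    rewrite tMK => /set1P cm1.
    by rewrite -(mulgK m c) cm1 mul1g.
  move/eqP => ->; rewrite groupV Mm mulKg Kk andbT /=.
  apply/negP => /eqP k1; rewrite k1 mulg1 in eg.
  by case/negP: Mg'; rewrite -(invgK g) eg groupV.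
by rewrite cards1.
Qed.

Lemma cent_fix_triv (T : finType) (A : {group {perm T}}) (a : {perm T}) (x : T) :
  [transitive A, on [set: T] | 'P] -> a \in 'C(A) -> a x = x -> a = 1.
Proof.
move=> trA cA ax; apply/permP => y; rewrite perm1.
have [n An ->] := atransP2 trA (in_setT x) (in_setT y).
rewrite /= apermE -permM -(centP cA n An) permM ax //.
Qed.

Lemma trans_normal (T : finType) (G N : {group {perm T}}) :
  [primitive G, on [set: T] | 'P] -> N <| G -> N :!=: 1 ->
  [transitive N, on [set: T] | 'P].
Proof.
move=> primG nNG ntN; case: (prim_trans_norm primG nNG) => // sub.
by case/negP: ntN; rewrite -subG1 (subset_trans sub (aperm_faithful G)).
Qed.

Lemma minnP (T : finType) (G N : {group {perm T}}) :
  min_normal N G -> N <| G /\ N :!=: 1.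
Proof.
by case/andP => sNG /mingroupP [/andP[ntN nNG] _]; rewrite /normal sNG nNG.
Qed.

Lemma Mmul (T : finType) (G N : {group {perm T}}) (x : T) :
  [primitive G, on [set: T] | 'P] -> N <| G -> N :!=: 1 ->
  'C_G[x | 'P] * N = G.
Proof.
move=> primG nNG ntN; have [trG _] := andP primG.
apply/(subgroup_transitiveP (in_setT x) (normal_sub nNG) trG).
exact: (trans_normal primG nNG ntN).
Qed.

Lemma two_min (T : finType) (G N1 N2 : {group {perm T}}) (x : T) :
  [primitive G, on [set: T] | 'P] -> min_normal N1 G -> min_normal N2 G -> N1 != N2 ->
  perfect_code_of G ('C_G[x | 'P]).
Proof.
move=> primG m1 m2 neq.
have [nN1 ntN1] := minnP m1; have [nN2 ntN2] := minnP m2.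
have tI : N1 :&: N2 = 1.
  apply/eqP; apply/negPn/negP => ntI.
  case/andP: m1 => _ /mingroupP [_ min1]; case/andP: m2 => _ /mingroupP [_ min2].
  have e1 : N1 :&: N2 = N1.
    apply: (min1 (N1 :&: N2)%G) => //=; last exact: subsetIl.
    by rewrite ntI normsI ?normal_norm.
  have e2 : (N1 : {set _}) = N2.
    apply: (min2 N1) => /=; first by rewrite ntN1 normal_norm.
    by rewrite -e1 subsetIr.
  by case/negP: neq; apply/eqP; apply: val_inj.
have cN : N2 \subset 'C(N1).
  apply/commG1P/trivgP; rewrite -tI setIC.
  apply: commg_subI; rewrite subsetI subxx /=.
    exact: subset_trans (normal_sub nN2) (normal_norm nN1).
  exact: subset_trans (normal_sub nN1) (normal_norm nN2).
apply: (pc_compl (K := N2)) (subsetIl _ _) (normal_sub nN2) _ (Mmul x primG nN2 ntN2).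
apply/trivgP/subsetP => a /setIP[/setIP[Ga /astab1P ax] Na]; apply/set1P.
exact: cent_fix_triv (trans_normal primG nN1 ntN1) (subsetP cN a Na) ax.
Qed.

Lemma bridge (T : finType) (G N D : {group {perm T}}) :
  min_normal N G -> ~~ abelian N -> D \subset N -> subdirect D N ->
  exists K : {group {perm T}}, [/\ K \subset N, D :&: K = 1 & D * K = N].
Proof.
case/andP => sNG mN nabN sDN sdD.
have chN := minnormal_charsimple mN.
have [H [sHN simH [I sIA defN]]] := charsimple_dprod chN.
pose F := fun f : {perm {perm T}} => generated_group [set f y | y in H].
pose s := [seq F f | f <- enum I].
have eF : forall f, f \in I -> F f :=: f @: H.
  move=> f If; have Af := subsetP sIA f If.
  rewrite /F /= gen_set_id // -(autmE Af) -morphimEsub //; exact: groupP.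
have isoF : forall f, f \in I -> H \isog F f.
  move=> f If; have Af := subsetP sIA f If.
  rewrite (eF f If) -(autmE Af) -morphimEsub //.
  exact: sub_isog sHN (injm_autm Af).
have defs : \big[dprod/1]_(X <- s) (X : {set {perm T}}) = N.
  rewrite big_map big_enum /= -defN; apply: eq_bigr => f If; exact: eF.
have simp : forall X, X \in s -> simple X.
  by move=> X /mapP[f]; rewrite mem_enum => If ->; rewrite -(isog_simple (isoF f If)).
have nabH : ~~ abelian H.
  apply/negP => abH; case/negP: nabN; apply: (bd_abelian defs).
  by move=> X /mapP[f]; rewrite mem_enum => If ->; rewrite -(isog_abelian (isoF f If)).
apply: (key_compl defs simp sDN) => X Xs.
have nX := bd_normal defs Xs.
have nabX : ~~ abelian X.
  by case/mapP: Xs => f; rewrite mem_enum => If ->; rewrite -(isog_abelian (isoF f If)).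
have sf : simple_factor X N by rewrite /simple_factor nX simp.
have eP := sdD X sf.
have sXC := bd_cent defs Xs.
apply/eqP; rewrite eqEsubset mul_subG ?subsetIl //=.
apply: (subset_trans sXC).
have sX : X \subset D * 'C_N(X).
  apply/subsetP => y; rewrite -{1}eP => /imsetP[d Dd ->].
  have dNC : d \in X * 'C_N(X) := subsetP sXC d (subsetP sDN d Dd).
  by rewrite /factor_proj /divgr mem_mulg ?groupV // (mem_remgr dNC).
by rewrite (subset_trans (mulSg _ sX)) // -mulgA mulGid.
Qed.

Theorem theorem1p4 (T : finType) (G : {group {perm T}}) (x : T) :
  [primitive G, on [set: T] | 'P] ->
  typeHA G \/ typeHS G \/ typeHC G \/ typeTW G \/ typeSD G \/ typeCD G ->
  perfect_code_of G ('C_G[x | 'P])%g.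
Proof.
move=> primG types.
have sMG : 'C_G[x | 'P] \subset G := subsetIl _ _.
have eMN : forall N : {group {perm T}}, N \subset G -> 'C_G[x | 'P] :&: N = 'C_N[x | 'P].
  by move=> N sNG; rewrite setIC setIA (setIidPl sNG).
have reg : forall N : {group {perm T}}, min_normal N G -> 'C_N[x | 'P] = 1 ->
    perfect_code_of G ('C_G[x | 'P]).
  move=> N mN tN; have [nN ntN] := minnP mN.
  apply: (pc_compl (K := N)) sMG (normal_sub nN) _ (Mmul x primG nN ntN).
  by rewrite eMN ?normal_sub.
have sdcd : forall N : {group {perm T}}, min_normal N G -> ~~ abelian N ->
    subdirect 'C_N[x | 'P] N -> perfect_code_of G ('C_G[x | 'P]).
  move=> N mN nabN sd; have [nN ntN] := minnP mN.
  have sNG := normal_sub nN.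
  have [K [sKN tK eK]] := bridge mN nabN (subsetIl _ _) sd.
  apply: (pc_compl (K := K)) sMG (subset_trans sKN sNG) _ _.
    apply/trivgP; rewrite -tK; apply/subsetP => a /setIP[/setIP[Ga ax] Ka].
    by apply/setIP; split => //; apply/setIP; split => //; exact: (subsetP sKN).
  have e1 := Mmul x primG nN ntN.
  have sDM : 'C_N[x | 'P] \subset 'C_G[x | 'P] by rewrite setSI.
  apply/eqP; rewrite eqEsubset mul_subG ?subsetIl ?(subset_trans sKN sNG) //=.
  by rewrite -{1}e1 -eK mulgA mulGSid.
case: types => [HA | [HS | [HC | [TW | [SD | CD]]]]].
- case: HA => N0 [mN abN].
  apply: (reg N0 mN); have [nN ntN] := minnP mN.
  apply/trivgP/subsetP => a /setIP[Na /astab1P ax]; apply/set1P.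
  exact: cent_fix_triv (trans_normal primG nN ntN) (subsetP abN a Na) ax.
- case: HS => N1 [N2 [m1 m2 neq _ _]].
  exact: two_min primG m1 m2 neq.
- case: HC => N1 [N2 [m1 m2 neq _ _]].
  exact: two_min primG m1 m2 neq.
- case: TW => N0 [[[mN _] _ _] tw].
  exact: reg N0 mN (tw x).
- case: SD => N0 [[[mN _] nab _] sd].
  exact: sdcd N0 mN nab (sd x).1.
- case: CD => N0 [[[mN _] nab _] sd].
  exact: sdcd N0 mN nab (sd x).1.
Qed.
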